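(* Let $X$ be a finite $T_0$ topological space, $\mathcal V$ a multivector field on $X$ with $X$ invariant, and $\mathcal M=\{M_p\mid p\in\mathbb P\}$ an indexed family of mutually disjoint subsets of $X$. The following are equivalent: (i) $\mathcal M$ is a Morse decomposition of $X$; (ii) each $M_p$ is a saturated isolated invariant subset of $X$, and $\mathbb P$ admits a partial order $\le$ such that for every essential solution $\gamma$ in $X$ there exist $p,q\in\mathbb P$ with $p\ge q$, $\alpha(\gamma)\subset M_p$ and $\omega(\gamma)\subset M_q$; (iii) each $M_p$ is an isolated invariant subset of $X$, and $\mathbb P$ admits a partial order $\le$ such that for every essential solution $\gamma$ in $X$ either $\operatorname{im}\gamma\subset M_p$ for some $p\in\mathbb P$, or there exist $p,q\in\mathbb P$ with $p>q$, $\alpha(\gamma)\subset M_p$ and $\omega(\gamma)\subset M_q$. In particular, every Morse set in a Morse decomposition is saturated and isolated.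
   Context: Notation: $\operatorname{cl}$ is closure; $A\subset X$ is locally closed if $\operatorname{cl}A\setminus A$ is closed. A multivector field $\mathcal V$ on $X$ is a partition of $X$ into locally closed sets (multivectors); $[x]_{\mathcal V}$ is the multivector containing $x$. A multivector $V$ is critical if $H(\operatorname{cl}V,\operatorname{cl}V\setminus V)$ (relative singular homology) is nontrivial, regular otherwise. $A$ is $\mathcal V$-compatible if it is a union of multivectors; $\langle A\rangle_{\mathcal V}$ is the smallest locally closed $\mathcal V$-compatible set containing $A$. $\Pi_{\mathcal V}(x)=\operatorname{cl}\{x\}\cup[x]_{\mathcal V}$. A solution is a partial map $\gamma:\mathbb Z\nrightarrow X$ with domain an integer interval and $\gamma(t+1)\in\Pi_{\mathcal V}(\gamma(t))$; a path has finite domain; a full solution has domain $\mathbb Z$. $\alpha(\gamma)=\langle\bigcap_{t\le0}\gamma((-\infty,t])\rangle_{\mathcal V}$, $\omega(\gamma)=\langle\bigcap_{t\ge0}\gamma([t,\infty))\rangle_{\mathcal V}$. A full solution is essential unless $\alpha(\gamma)$ or $\omega(\gamma)$ lies in a single regular multivector; an essential solution in $A$ is one with image in $A$. $\operatorname{Inv}S$ is the set of $x\in S$ with an essential solution $\gamma$ in $S$, $\gamma(0)=x$; $S$ is invariant if $\operatorname{Inv}S=S$. An invariant $S$ is isolated invariant if there is a closed $N\supset\Pi_{\mathcal V}(S)$ such that every path in $N$ with endpoints in $S$ has image in $S$. A full solution is a link from $S_1$ to $S_2$ if $\alpha(\gamma)\cap S_1\ne\emptyset\ne\omega(\gamma)\cap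 S_2$. A Morse predecomposition of $X$ is an indexed family of mutually disjoint isolated invariant subsets $\{M_p\mid p\in\mathbb P\}$ such that every essential solution in $X$ is a link from some $M_p$ to some $M_q$. A preorder $\le$ on $\mathbb P$ is admissible if a link from $M_p$ to $M_q$ implies $q\le p$. An invariant $T\subset X$ is saturated if every essential solution $\gamma$ in $X$ with $\alpha(\gamma)\subset T$ and $\omega(\gamma)\subset T$ has $\operatorname{im}\gamma\subset T$. A Morse decomposition of $X$ is a Morse predecomposition all of whose members are saturated and for which some admissible preorder is a partial order. *)

(* Defs.v *)
From HB Require Import structures.
From mathcomp Require Import all_boot all_order all_algebra.
From mathcomp Require Import all_classical all_reals all_analysis.

Set Implicit Arguments.
Unset Strict Implicit.
Unset Printing Implicit Defensive.

Import Order.TTheory GRing.Theory Num.Theory.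
Import numFieldNormedType.Exports.
Local Open Scope classical_set_scope.
Local Open Scope ring_scope.

(* A singular n-simplex is represented by a map s : 'rV[R]_(n.+1) -> T *)
(* continuous on the standard simplex; two maps are identified when    *)
(* they agree on the standard simplex (this identification is built in *)
(* to the coefficient function [coef]).                                *)
Section SingularHomology.
Variables (R : realType) (T : topologicalType).

Definition std_simplex (n : nat) : set 'rV[R]_(n.+1) :=
  [set x | (forall i, 0 <= x ord0 i) /\ \sum_(i < n.+1) x ord0 i = 1].

Definition face_incl (n : nat) (i : 'I_(n.+2)) (x : 'rV[R]_(n.+1)) : 'rV[R]_(n.+2) :=
  \row_j match unlift i j with Some k => x ord0 k | None => 0 end.

Definition sing_map (n : nat) := 'rV[R]_(n.+1) -> T.

Definition chain (n : nat) := seq (int * sing_map n).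

Definition is_simplex_in (n : nat) (A : set T) (s : sing_map n) : Prop :=
  {within @std_simplex n, continuous (s : 'rV[R]_(n.+1) -> T)} /\ s @` @std_simplex n `<=` A.

Definition chain_in (n : nat) (A : set T) (c : chain n) : Prop :=
  forall p, p \in c -> is_simplex_in A p.2.

Definition same_simplex (n : nat) (s t : sing_map n) : Prop :=
  forall x, @std_simplex n x -> s x = t x.

Definition coef (n : nat) (c : chain n) (t : sing_map n) : int :=
  \sum_(p <- c) (if `[< same_simplex p.2 t >] then p.1 else 0).

Definition boundary (n : nat) (c : chain n.+1) : chain n :=
  flatten [seq [seq (((-1) ^+ i * p.1)%R, p.2 \o face_incl i) | i : 'I_(n.+2)]
          | p <- c].

Definition rel_cycle (A B : set T) (n : nat) : chain n -> Prop :=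
  match n return chain n -> Prop with
  | 0 => fun c => chain_in A c
  | m.+1 => fun c => chain_in A c /\
      exists e : chain m, chain_in B e /\ coef (boundary c) = coef e
  end.

Definition rel_boundary (A B : set T) (n : nat) (c : chain n) : Prop :=
  exists (d : chain n.+1) (e : chain n),
    [/\ chain_in A d, chain_in B e &
        forall t, coef c t = coef (boundary d) t + coef e t].

Definition rel_homology_nontrivial (A B : set T) : Prop :=
  exists (n : nat) (c : chain n), rel_cycle A B c /\ ~ rel_boundary A B c.

End SingularHomology.

Section Dynamics.
Variables (R : realType) (T : topologicalType).

Definition locally_closed (A : set T) : Prop := closed (closure A `\` A).

Definition multivector_field (V : set (set T)) : Prop :=
  [/\ (forall W, V W -> W !=set0 /\ locally_closed W),
      (forall W W', V W -> V W' -> W `&` W' !=set0 -> W = W') &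
      (forall x, exists2 W, V W & W x)].

Variable V : set (set T).

Definition mv_of (x : T) : set T := \bigcup_(W in [set W | V W /\ W x]) W.

Definition critical (W : set T) : Prop :=
  rel_homology_nontrivial R (closure W) (closure W `\` W).
Definition regular (W : set T) : Prop := ~ critical W.

Definition compatible (A : set T) : Prop := forall x, A x -> mv_of x `<=` A.

Definition lc_hull (A : set T) : set T :=
  \bigcap_(B in [set B | A `<=` B /\ compatible B /\ locally_closed B]) B.

Definition Pi (x : T) : set T := closure [set x] `|` mv_of x.

Definition PiS (S : set T) : set T := \bigcup_(x in S) Pi x.

Definition full_solution (g : int -> T) : Prop := forall t, Pi (g t) (g (t + 1)).

Definition path_sol (n : nat) (g : nat -> T) : Prop :=
  forall k, (k < n)%N -> Pi (g k) (g k.+1).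

Definition alpha (g : int -> T) : set T :=
  lc_hull (\bigcap_(t in [set t : int | t <= 0]) (g @` [set s | s <= t])).
Definition omega (g : int -> T) : set T :=
  lc_hull (\bigcap_(t in [set t : int | 0 <= t]) (g @` [set s | t <= s])).

Definition essential (g : int -> T) : Prop :=
  full_solution g /\
  ~ (exists2 W, V W & regular W /\ (alpha g `<=` W \/ omega g `<=` W)).

Definition essential_in (A : set T) (g : int -> T) : Prop :=
  essential g /\ range g `<=` A.

Definition Inv (S : set T) : set T :=
  [set x | S x /\ exists g, essential_in S g /\ g 0 = x].

Definition invariant_set (S : set T) : Prop := Inv S = S.

Definition isolated_invariant (S : set T) : Prop :=
  invariant_set S /\
  exists N : set T, [/\ closed N, PiS S `<=` N &
    forall (n : nat) (g : nat -> T), path_sol n g ->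
      (forall k, (k <= n)%N -> N (g k)) -> S (g 0%N) -> S (g n) ->
      forall k, (k <= n)%N -> S (g k)].

Definition link (S1 S2 : set T) (g : int -> T) : Prop :=
  full_solution g /\ alpha g `&` S1 !=set0 /\ omega g `&` S2 !=set0.

Definition mutually_disjoint (P : Type) (M : P -> set T) : Prop :=
  forall p q, p <> q -> M p `&` M q = set0.

Definition morse_predecomposition (P : Type) (M : P -> set T) : Prop :=
  [/\ mutually_disjoint M, (forall p, isolated_invariant (M p)) &
      forall g, essential_in setT g -> exists p q, link (M p) (M q) g].

Definition preorder_rel (P : Type) (le : P -> P -> Prop) : Prop :=
  (forall p, le p p) /\ (forall p q r, le p q -> le q r -> le p r).

Definition partial_order_rel (P : Type) (le : P -> P -> Prop) : Prop :=
  preorder_rel le /\ (forall p q, le p q -> le q p -> p = q).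

Definition admissible (P : Type) (M : P -> set T) (le : P -> P -> Prop) : Prop :=
  preorder_rel le /\
  forall p q g, link (M p) (M q) g -> le q p.

Definition saturated (S : set T) : Prop :=
  invariant_set S /\
  forall g, essential_in setT g -> alpha g `<=` S -> omega g `<=` S -> range g `<=` S.

Definition morse_decomposition (P : Type) (M : P -> set T) : Prop :=
  [/\ morse_predecomposition M, (forall p, saturated (M p)) &
      exists le, admissible M le /\ partial_order_rel le].

End Dynamics.

(* Main.v *)
Require Import Defs.
From HB Require Import structures.
From mathcomp Require Import all_boot all_order all_algebra.
From mathcomp Require Import all_classical all_reals all_analysis.
From mathcomp Require Import zify.
Import Order.TTheory GRing.Theory Num.Theory.
Set Implicit Arguments.
Unset Strict Implicit.
Local Open Scope classical_set_scope.

Section Aux.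
Local Open Scope ring_scope.
Variables (R : realType) (T : topologicalType) (V : set (set T)).
Hypothesis finT : finite_set [set: T].
Hypothesis mvf : multivector_field V.

Definition Aset (g : int -> T) :=
  \bigcap_(t in [set t : int | t <= 0]) (g @` [set s | s <= t]).
Definition Oset (g : int -> T) :=
  \bigcap_(t in [set t : int | 0 <= t]) (g @` [set s | t <= s]).

Lemma hull_sub A B : A `<=` B -> compatible V B -> locally_closed B ->
  lc_hull V A `<=` B.
Proof. by move=> AB cB lB x hx; apply: hx. Qed.

Lemma sub_hull A : A `<=` lc_hull V A.
Proof. by move=> x Ax B [AB _]; apply: AB. Qed.

Lemma mv_self x : mv_of V x x.
Proof. case: mvf => _ _ cov; case: (cov x) => W VW Wx; by exists W. Qed.

Lemma mv_eq x W : V W -> W x -> mv_of V x = W.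
Proof.
case: mvf => _ dj _ VW Wx; apply/seteqP; split.
  move=> y [W' [VW' W'x] W'y].
  have E : W' = W by apply: dj => //; exists x.
  by rewrite -E.
by move=> y Wy; exists W.
Qed.

Lemma mv_sym x y : mv_of V x y -> mv_of V y x.
Proof. by case=> W [VW Wx] Wy; rewrite (mv_eq VW Wy). Qed.

Lemma Pi_cl x y : closure [set x] y -> Pi V x y.
Proof. by left. Qed.
Lemma Pi_mv x y : mv_of V x y -> Pi V x y.
Proof. by right. Qed.
Lemma Pi_refl x : Pi V x x.
Proof. by left; apply: subset_closure. Qed.

Lemma finite_min (Q : T -> int -> Prop) :
  (forall x t t', t' <= t -> Q x t -> Q x t') -> (forall x, exists t, Q x t) ->
  exists t, forall x, Q x t.
Proof.
move=> mono ex; have [s sE] := (finite_seqP _).1 finT.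
suff [t ht] : exists t, forall x, x \in s -> Q x t.
  exists t => x; apply: ht; have : [set: T] x by [].
  by rewrite sE.
elim: s {sE} => [|a l [t1 IH]]; first by exists 0.
have [t2 h2] := ex a.
case/orP: (le_total t1 t2) => le12.
  exists t1 => x; rewrite inE => /orP[/eqP->|xl]; last exact: IH.
  exact: mono le12 h2.
exists t2 => x; rewrite inE => /orP[/eqP->//|xl].
exact: mono le12 (IH x xl).
Qed.

Lemma Aset_n0 g : Aset g !=set0.
Proof.
apply: contrapT => H.
have [t ht] : exists t, forall x, t <= 0 /\ forall s, s <= t -> g s <> x.
  apply: finite_min.
    move=> x t t' le [t0 h]; split; first by lia.
    move=> s st; apply: h; lia.
  move=> x; apply: contrapT => H2; apply: H; exists x => t t0.
  apply: contrapT => H3; apply: H2; exists t; split=> // s st gs.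
  by apply: H3; exists s.
by have [_ /(_ t (le_refl t))] := ht (g t).
Qed.

Lemma Oset_n0 g : Oset g !=set0.
Proof.
apply: contrapT => H.
have [t ht] : exists t, forall x, t <= 0 /\ forall s, - t <= s -> g s <> x.
  apply: finite_min.
    move=> x t t' le [t0 h]; split; first by lia.
    move=> s st; apply: h; lia.
  move=> x; apply: contrapT => H2; apply: H; exists x => t /= t0.
  apply: contrapT => H3; apply: H2; exists (- t); split; first by lia.
  move=> s st gs; apply: H3; exists s => //; lia.
by have [_ /(_ (- t) (le_refl _))] := ht (g (- t)).
Qed.

Lemma Aset_shift g h c t0 : (forall t, t <= t0 -> h t = g (t + c)) ->
  Aset h = Aset g.
Proof.
move=> E; apply/seteqP; split=> x hx t /= tle.
  have [|s sle <-] := hx (t - `|c| - `|t0|); first by simpl in *; lia.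
  exists (s + c); first by simpl in *; lia.
  by simpl in *; rewrite E //; lia.
move: {hx}(hx) => hx; have [|s sle <-] := hx (t + c - `|c| - `|t0| - 1); first by simpl in *; lia.
exists (s - c); first by simpl in *; lia.
by simpl in *; rewrite E; [rewrite subrK | lia].
Qed.

Lemma Oset_shift g h c t0 : (forall t, t0 <= t -> h t = g (t + c)) ->
  Oset h = Oset g.
Proof.
move=> E; apply/seteqP; split=> x hx t /= tle.
  have [|s sle <-] := hx (t + `|c| + `|t0|); first by simpl in *; lia.
  exists (s + c); first by simpl in *; lia.
  by simpl in *; rewrite E //; lia.
move: {hx}(hx) => hx; have [|s sle <-] := hx (t + c + `|c| + `|t0| + 1); first by simpl in *; lia.
exists (s - c); first by simpl in *; lia.
by simpl in *; rewrite E; [rewrite subrK | lia].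
Qed.

Lemma alpha_shift g h c t0 : (forall t, t <= t0 -> h t = g (t + c)) ->
  alpha V h = alpha V g.
Proof. by move=> E; rewrite /alpha -/(Aset h) -/(Aset g) (Aset_shift E). Qed.

Lemma omega_shift g h c t0 : (forall t, t0 <= t -> h t = g (t + c)) ->
  omega V h = omega V g.
Proof. by move=> E; rewrite /omega -/(Oset h) -/(Oset g) (Oset_shift E). Qed.


Lemma closure_pt (S : set T) z : closure S z -> exists x, S x /\ closure [set x] z.
Proof.
have [s sE] := (finite_seqP _).1 finT.
suff H : forall l : seq T, closure (S `&` [set` l]) z -> exists x, S x /\ closure [set x] z.
  move=> h; apply: (H s); suff -> : S `&` [set` s] = S by [].
  apply/seteqP; split=> [x []//|x Sx]; split=> //.
  by have : [set: T] x by []; rewrite sE.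
elim=> [|a l IH].
  have -> : S `&` [set` [::]] = set0.
    by apply/seteqP; split=> x //= [_]; rewrite in_nil.
  by rewrite closure0.
have -> : S `&` [set` (a :: l)] = (S `&` [set a]) `|` (S `&` [set` l]).
  apply/seteqP; split=> x /=.
    case=> Sx; rewrite inE => /orP[/eqP Ex|xl].
      by left; split.
    by right; split.
  case=> -[Sx].
    by move=> Ex; subst x; split=> //; rewrite inE eqxx.
  by move=> xl; split=> //; rewrite inE xl orbT.
rewrite closureU => -[h|/IH [x [Sx cx]]]; last by exists x.
case: (pselect (S a)) => Sa.
  exists a; split=> //; move: h; apply: closureS => y [_ Ey].
  exact: Ey.
have E : S `&` [set a] = set0.
  apply/seteqP; split=> [y [Sy Ey]|y //].
  have Ey' : y = a := Ey; by apply: Sa; rewrite -Ey'.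
by move: h; rewrite E closure0.
Qed.

Lemma closed_of (D : set T) : closure D `<=` D -> closed D.
Proof.
move=> h; apply/closure_id; apply/seteqP; split; [exact: subset_closure | exact: h].
Qed.

Lemma lc_crit (C : set T) :
  (forall z u v, C z -> closure [set z] u -> closure [set u] v -> C v -> C u) ->
  locally_closed C.
Proof.
move=> H; apply: closed_of => v hv.
have clv : closure C v.
  have : closure (closure C) v by apply: closureS hv => y [].
  by rewrite -(closure_id _).1 //; apply: closed_closure.
split=> // Cv.
have [u [[clu nCu] uv]] := closure_pt hv.
have [z [Cz zu]] := closure_pt clu.
exact: nCu (H z u v Cz zu uv Cv).
Qed.

Inductive reach : T -> T -> Prop :=
| reach_refl x : reach x x
| reach_step x y z : Pi V x y -> reach y z -> reach x z.

Lemma reach_trans x y z : reach x y -> reach y z -> reach x z.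
Proof.
elim=> [//|a b c Pab _ IH] h; exact: reach_step Pab (IH h).
Qed.

Lemma reach_Pi x y : Pi V x y -> reach x y.
Proof. by move=> h; apply: reach_step h (reach_refl y). Qed.

Lemma reach_sol g : full_solution V g -> forall (k : nat) s, reach (g s) (g (s + k%:Z)).
Proof.
move=> fg; elim=> [|k IH] s; first by rewrite addr0; apply: reach_refl.
apply: reach_step (fg s) _.
have -> : s + k.+1%:Z = (s + 1) + k%:Z by lia.
exact: IH.
Qed.

Lemma reach_le g s s' : full_solution V g -> s <= s' -> reach (g s) (g s').
Proof.
move=> fg le; have -> : s' = s + (`|s' - s|%N)%:Z by lia.
exact: reach_sol.
Qed.

Lemma Aset_rec g : full_solution V g -> forall a b, Aset g a -> Aset g b -> reach a b.
Proof.
move=> fg a b Ha Hb.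
have [sb sb0 <-] := Hb 0 (le_refl _).
have [sa sab <-] := Ha sb sb0.
exact: reach_le.
Qed.

Lemma Oset_rec g : full_solution V g -> forall a b, Oset g a -> Oset g b -> reach a b.
Proof.
move=> fg a b Ha Hb.
have [sa sa0 <-] := Ha 0 (le_refl _).
have [sb sab <-] := Hb sa sa0.
exact: reach_le.
Qed.

Definition fwd (g : int -> T) := forall t, 0 <= t -> Pi V (g t) (g (t + 1)).

Definition join (g1 g2 : int -> T) (t : int) := if t <= 0 then g1 t else g2 t.

Lemma join_l g1 g2 t : t <= 0 -> join g1 g2 t = g1 t.
Proof. by rewrite /join => ->. Qed.

Lemma join_r g1 g2 t : g1 0 = g2 0 -> 0 <= t -> join g1 g2 t = g2 t.
Proof.
rewrite /join => e t0; case: ifP => // h.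
by have -> : t = 0 by lia.
Qed.

Lemma join_full g1 g2 : full_solution V g1 -> fwd g2 -> g1 0 = g2 0 ->
  full_solution V (join g1 g2).
Proof.
move=> f1 f2 e t.
case: (lerP t (-1)) => h.
  have h1 : t <= 0 by lia.
  have h2 : t + 1 <= 0 by lia.
  by rewrite (join_l _ _ h1) (join_l _ _ h2); apply: f1.
have h1 : 0 <= t by lia.
have h2 : 0 <= t + 1 by lia.
by rewrite (join_r e h1) (join_r e h2); apply: f2.
Qed.

Lemma full_fwd g : full_solution V g -> fwd g.
Proof. by move=> f t _; apply: f. Qed.

Lemma prepend x z : reach x z -> forall g2, fwd g2 -> g2 0 = z ->
  exists g3 (n : nat), [/\ fwd g3, g3 0 = x & forall t, 0 <= t -> g3 (t + n%:Z) = g2 t].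
Proof.
elim=> [a|a b c Pab _ IH] g2 f2 e2.
  by exists g2, 0%N; split=> // t _; rewrite addr0.
have [g3 [n [f3 e3 t3]]] := IH g2 f2 e2.
exists (fun t => if t <= 0 then a else g3 (t - 1)), n.+1; split.
- move=> t t0 /=; case: ifP => h1; case: ifP => h2; try lia.
    have -> : t = 0 by lia.
    by rewrite add0r subrr e3.
  have -> : t + 1 - 1 = (t - 1) + 1 by lia.
  by apply: f3; lia.
- by rewrite lexx.
- move=> t t0 /=; case: ifP => h; first by lia.
  by rewrite -t3 //; congr g3; lia.
Qed.


Lemma iso_compat S : isolated_invariant R V S -> compatible V S.
Proof.
case=> _ [N [_ PiN iso]] x Sx y mxy.
pose g := fun k : nat => nth x [:: x; y; x] k.
have := iso 2%N g _ _ Sx Sx 1%N isT; apply.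
  case=> [|[|//]] _ /=; first exact: Pi_mv.
  by apply: Pi_mv; apply: mv_sym.
case=> [|[|[|//]]] _ /=; apply: PiN.
- by exists x => //; apply: Pi_refl.
- by exists x => //; apply: Pi_mv.
- by exists x => //; apply: Pi_refl.
Qed.

Lemma iso_lc S : isolated_invariant R V S -> locally_closed S.
Proof.
case=> _ [N [_ PiN iso]]; apply: lc_crit => z u v Sz zu uv Sv.
pose g := fun k : nat => nth z [:: z; u; v] k.
have := iso 2%N g _ _ Sz Sv 1%N isT; apply.
  by case=> [|[|//]] _ /=; apply: Pi_cl.
case=> [|[|[|//]]] _ /=; apply: PiN.
- by exists z => //; apply: Pi_refl.
- by exists z => //; apply: Pi_cl.
- by exists v => //; apply: Pi_refl.
Qed.

Lemma Aset_range g : Aset g `<=` range g.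
Proof. by move=> x /(_ 0 (le_refl _)) [s _ <-]; exists s. Qed.

Lemma Oset_range g : Oset g `<=` range g.
Proof. by move=> x /(_ 0 (le_refl _)) [s _ <-]; exists s. Qed.

Lemma alpha_sub g S : compatible V S -> locally_closed S -> range g `<=` S ->
  alpha V g `<=` S.
Proof.
move=> cS lS rS; apply: hull_sub => //.
by move=> x /Aset_range; apply: rS.
Qed.

Lemma omega_sub g S : compatible V S -> locally_closed S -> range g `<=` S ->
  omega V g `<=` S.
Proof.
move=> cS lS rS; apply: hull_sub => //.
by move=> x /Oset_range; apply: rS.
Qed.

Lemma alpha_n0 g : alpha V g !=set0.
Proof. by have [x Ax] := Aset_n0 g; exists x; apply: sub_hull. Qed.

Lemma omega_n0 g : omega V g !=set0.
Proof. by have [x Ax] := Oset_n0 g; exists x; apply: sub_hull. Qed.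

Lemma sat_hull (A S : set T) : (forall a b, A a -> A b -> reach a b) ->
  saturated R V S -> compatible V S -> locally_closed S ->
  (lc_hull V A `&` S) !=set0 -> lc_hull V A `<=` S.
Proof.
move=> rec [inv satH] cS lS [y [hy Sy]].
pose C := [set z | (exists a, A a /\ reach a z) /\ (exists a, A a /\ reach z a)].
have hullC : lc_hull V A `<=` C.
  apply: hull_sub.
  - by move=> a Aa; split; exists a; split=> //; apply: reach_refl.
  - move=> z [[a [Aa raz]] [a' [Aa' rza']]] w mzw; split.
      by exists a; split=> //; apply: reach_trans raz (reach_Pi (Pi_mv mzw)).
    exists a'; split=> //; apply: reach_step rza'.
    by apply: Pi_mv; apply: mv_sym.
  - apply: lc_crit => z u v [[a [Aa raz]] _] zu uv [_ [a' [Aa' rva']]]; split.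
      by exists a; split=> //; apply: reach_trans raz (reach_Pi (Pi_cl zu)).
    by exists a'; split=> //; apply: reach_step (Pi_cl uv) rva'.
have [[a1 [A1 r1]] [a2 [A2 r2]]] := hullC y hy.
suff AS : A `<=` S by apply: hull_sub.
move=> x Ax.
have ryx : reach y x := reach_trans r2 (rec a2 x A2 Ax).
have rxy : reach x y := reach_trans (rec x a1 Ax A1) r1.
have : Defs.Inv R V S y by rewrite inv.
case=> _ [s [[[fs nrs] rs] s0]].
have [g3 [n3 [f3 g30 t3]]] := prepend rxy (full_fwd fs) s0.
have [g4 [n4 [f4 g40 t4]]] := prepend ryx f3 g30.
have e0 : s 0 = g4 0 by rewrite s0 g40.
pose h := join s g4.
have fh : full_solution V h := join_full fs f4 e0.
have ah : alpha V h = alpha V s.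
  by apply: (@alpha_shift _ _ 0 0) => t t0; rewrite addr0 /h join_l.
have oh : omega V h = omega V s.
  apply: (@omega_shift _ _ (- (n4%:Z + n3%:Z)) (n4%:Z + n3%:Z)) => t tle.
  rewrite /h join_r //; last by lia.
  have -> : t = (t - n4%:Z - n3%:Z + n3%:Z) + n4%:Z by lia.
  rewrite t4; last by lia.
  rewrite t3; last by lia.
  by congr s; lia.
have eh : essential R V h by split=> //; rewrite ah oh.
have := satH h (conj eh (@subsetT _ _)).
rewrite ah oh => /(_ (alpha_sub cS lS rs) (omega_sub cS lS rs)) rh.
have : S (h n4%:Z) by apply: rh; exists n4%:Z.
rewrite /h join_r //.
have -> : g4 n4%:Z = x by rewrite -(add0r n4%:Z) t4 // g30.
exact.
Qed.


Definition nreg_a (g : int -> T) :=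
  ~ (exists2 W, V W & regular R W /\ alpha V g `<=` W).
Definition nreg_o (g : int -> T) :=
  ~ (exists2 W, V W & regular R W /\ omega V g `<=` W).

Lemma iso_inv S : isolated_invariant R V S -> invariant_set R V S.
Proof. by case. Qed.

Lemma get_sol S x : invariant_set R V S -> S x ->
  exists s, [/\ essential R V s, range s `<=` S & s 0 = x].
Proof.
move=> inv Sx; have : Defs.Inv R V S x by rewrite inv.
by case=> _ [s [[es rs] s0]]; exists s.
Qed.

Lemma ess_nreg s : essential R V s -> nreg_a s /\ nreg_o s.
Proof.
case=> _ H; split=> -[W VW [rW sW]]; apply: H; exists W => //; split=> //.
  by left.
by right.
Qed.

Lemma fix_back S g : isolated_invariant R V S -> full_solution V g ->
  (alpha V g `&` S) !=set0 ->
  exists h, [/\ full_solution V h, (alpha V h `&` S) !=set0,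
             omega V h = omega V g & nreg_a h].
Proof.
move=> iS fg aS.
case: (pselect (exists2 W, V W & regular R W /\ alpha V g `<=` W));
  last by move=> nr; exists g.
case=> W VW [rW aW].
have [z [az Sz]] := aS.
have WS : W `<=` S by rewrite -(mv_eq VW (aW z az)); exact: (iso_compat iS Sz).
have [a Aa] := Aset_n0 g.
have aSa : S a by apply: WS; apply: aW; apply: sub_hull.
have [ta _ ga] := Aa 0 (le_refl _).
have [s [es rs s0]] := get_sol (iso_inv iS) aSa.
pose g2 := fun t => g (t + ta).
have f2 : fwd g2.
  by move=> t _; rewrite /g2 addrAC; apply: fg.
have e0 : s 0 = g2 0 by rewrite s0 /g2 add0r.
exists (join s g2); split.
- exact: join_full (proj1 es) f2 e0.
- rewrite (@alpha_shift s (join s g2) 0 0); last by move=> t t0; rewrite addr0 join_l.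
  have [b Ab] := Aset_n0 s; exists b; split; first exact: sub_hull.
  by apply: rs; apply: Aset_range.
- by apply: (@omega_shift _ _ ta 0) => t t0; rewrite join_r.
- rewrite /nreg_a (@alpha_shift s (join s g2) 0 0); last by move=> t t0; rewrite addr0 join_l.
  exact: (ess_nreg es).1.
Qed.

Lemma fix_front S g : isolated_invariant R V S -> full_solution V g ->
  (omega V g `&` S) !=set0 ->
  exists h, [/\ full_solution V h, (omega V h `&` S) !=set0,
             alpha V h = alpha V g & nreg_o h].
Proof.
move=> iS fg oS.
case: (pselect (exists2 W, V W & regular R W /\ omega V g `<=` W));
  last by move=> nr; exists g.
case=> W VW [rW oW].
have [z [oz Sz]] := oS.
have WS : W `<=` S by rewrite -(mv_eq VW (oW z oz)); exact: (iso_compat iS Sz).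
have [a Oa] := Oset_n0 g.
have aSa : S a by apply: WS; apply: oW; apply: sub_hull.
have [ta _ ga] := Oa 0 (le_refl _).
have [s [es rs s0]] := get_sol (iso_inv iS) aSa.
pose g1 := fun t => g (t + ta).
have f1 : full_solution V g1.
  by move=> t; rewrite /g1 addrAC; apply: fg.
have e0 : g1 0 = s 0 by rewrite s0 /g1 add0r.
exists (join g1 s); split.
- exact: join_full f1 (full_fwd (proj1 es)) e0.
- rewrite (@omega_shift s (join g1 s) 0 0); last by move=> t t0; rewrite addr0 join_r.
  have [b Ob] := Oset_n0 s; exists b; split; first exact: sub_hull.
  by apply: rs; apply: Oset_range.
- by apply: (@alpha_shift _ _ ta 0) => t t0; rewrite join_l.
- rewrite /nreg_o (@omega_shift s (join g1 s) 0 0); last by move=> t t0; rewrite addr0 join_r.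
  exact: (ess_nreg es).2.
Qed.

Lemma link_ess S1 S2 g : isolated_invariant R V S1 -> isolated_invariant R V S2 ->
  link V S1 S2 g ->
  exists h, [/\ essential R V h, (alpha V h `&` S1) !=set0 & (omega V h `&` S2) !=set0].
Proof.
move=> i1 i2 [fg [a1 o2]].
have [h1 [f1 a1' o1 n1]] := fix_back i1 fg a1.
have o2i : (omega V h1 `&` S2) !=set0 by rewrite o1.
have [h2 [f2 o2' a2 n2]] := fix_front i2 f1 o2i.
exists h2; split=> //; last by rewrite a2.
split=> // -[W VW [rW [aW|oW]]].
  by apply: n1; exists W => //; rewrite -a2.
by apply: n2; exists W.
Qed.

End Aux.

Lemma disj_eq (T : topologicalType) (P : Type) (M : P -> set T) p q (A : set T) :
  mutually_disjoint M -> A `<=` M q -> (A `&` M p) !=set0 -> p = q.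
Proof.
move=> dj Aq [x [Ax Mpx]]; case: (pselect (p = q)) => // ne.
have : (M p `&` M q) x by split=> //; apply: Aq.
by rewrite dj.
Qed.

Theorem theorem4p11 (R : realType) (T : topologicalType)
    (V : set (set T)) (P : Type) (M : P -> set T) :
  finite_set [set: T] -> kolmogorov_space T ->
  multivector_field V -> invariant_set R V [set: T] ->
  mutually_disjoint M ->
  [/\ morse_decomposition R V M <->
        ((forall p, saturated R V (M p) /\ isolated_invariant R V (M p)) /\
         exists le : P -> P -> Prop, partial_order_rel le /\
           forall g, essential_in R V setT g ->
             exists p q, [/\ le q p, alpha V g `<=` M p & omega V g `<=` M q]),
      morse_decomposition R V M <->
        ((forall p, isolated_invariant R V (M p)) /\
         exists le : P -> P -> Prop, partial_order_rel le /\
           forall g, essential_in R V setT g ->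
             (exists p, range g `<=` M p) \/
             exists p q, [/\ le q p, q <> p, alpha V g `<=` M p & omega V g `<=` M q])
    & morse_decomposition R V M ->
        forall p, saturated R V (M p) /\ isolated_invariant R V (M p)].
Proof.
move=> finT _ mvf _ dj.
have cM : forall p, isolated_invariant R V (M p) -> compatible V (M p).
  by move=> p; apply: iso_compat.
have lM : forall p, isolated_invariant R V (M p) -> locally_closed (M p).
  by move=> p; apply: iso_lc.
have MD_ii : morse_decomposition R V M ->
  ((forall p, saturated R V (M p) /\ isolated_invariant R V (M p)) /\
   exists le : P -> P -> Prop, partial_order_rel le /\
     forall g, essential_in R V setT g ->
       exists p q, [/\ le q p, alpha V g `<=` M p & omega V g `<=` M q]).
  case=> -[_ iso links] sat [le [[pre adm] po]].
  split; first by move=> p; split.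
  exists le; split=> // g eg.
  have [p [q lk]] := links g eg.
  have fg := eg.1.1.
  exists p, q; split; first exact: adm lk.
  - apply: (sat_hull finT mvf (Aset_rec fg)) (sat p) (cM p (iso p)) (lM p (iso p)) _.
    exact: lk.2.1.
  - apply: (sat_hull finT mvf (Oset_rec fg)) (sat q) (cM q (iso q)) (lM q (iso q)) _.
    exact: lk.2.2.
have ii_MD : ((forall p, saturated R V (M p) /\ isolated_invariant R V (M p)) /\
   exists le : P -> P -> Prop, partial_order_rel le /\
     forall g, essential_in R V setT g ->
       exists p q, [/\ le q p, alpha V g `<=` M p & omega V g `<=` M q]) ->
  morse_decomposition R V M.
  case=> si [le [po H]].
  split.
  - split=> //; first by move=> p; exact: (si p).2.
    move=> g eg; have [p [q [l ap oq]]] := H g eg.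
    exists p, q; split; first exact: eg.1.1.
    split.
      by have [x ax] := alpha_n0 V finT g; exists x; split=> //; apply: ap.
    by have [x ox] := omega_n0 V finT g; exists x; split=> //; apply: oq.
  - by move=> p; exact: (si p).1.
  - exists le; split=> //; split; first exact: po.1.
    move=> p q g lk.
    have [h [eh ah oh]] := link_ess finT mvf (si p).2 (si q).2 lk.
    have [p' [q' [l ap oq]]] := H h (conj eh (@subsetT _ _)).
    have e1 : p = p' := disj_eq dj ap ah.
    have e2 : q = q' := disj_eq dj oq oh.
    by rewrite e1 e2.
have ii_iii : ((forall p, saturated R V (M p) /\ isolated_invariant R V (M p)) /\
   exists le : P -> P -> Prop, partial_order_rel le /\
     forall g, essential_in R V setT g ->
       exists p q, [/\ le q p, alpha V g `<=` M p & omega V g `<=` M q]) ->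
  ((forall p, isolated_invariant R V (M p)) /\
         exists le : P -> P -> Prop, partial_order_rel le /\
           forall g, essential_in R V setT g ->
             (exists p, range g `<=` M p) \/
             exists p q, [/\ le q p, q <> p, alpha V g `<=` M p & omega V g `<=` M q]).
  case=> si [le [po H]]; split; first by move=> p; exact: (si p).2.
  exists le; split=> // g eg.
  have [p [q [l ap oq]]] := H g eg.
  case: (pselect (q = p)) => [e|ne].
    left; exists p; subst q.
    exact: (si p).1.2 g eg ap oq.
  by right; exists p, q; split.
have iii_ii : ((forall p, isolated_invariant R V (M p)) /\
         exists le : P -> P -> Prop, partial_order_rel le /\
           forall g, essential_in R V setT g ->
             (exists p, range g `<=` M p) \/
             exists p q, [/\ le q p, q <> p, alpha V g `<=` M p & omega V g `<=` M q]) ->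
  ((forall p, saturated R V (M p) /\ isolated_invariant R V (M p)) /\
   exists le : P -> P -> Prop, partial_order_rel le /\
     forall g, essential_in R V setT g ->
       exists p q, [/\ le q p, alpha V g `<=` M p & omega V g `<=` M q]).
  case=> iso [le [po H]].
  have H' : forall g, essential_in R V setT g ->
       exists p q, [/\ le q p, alpha V g `<=` M p & omega V g `<=` M q].
    move=> g eg; case: (H g eg) => [[p rp]|[p [q [l _ ap oq]]]]; last by exists p, q.
    exists p, p; split; first exact: po.1.1.
      exact: alpha_sub (cM p (iso p)) (lM p (iso p)) rp.
    exact: omega_sub (cM p (iso p)) (lM p (iso p)) rp.
  split; last by exists le.
  move=> p; split=> //; split; first by case: (iso p).
  move=> g eg ap oq.
  case: (H g eg) => [[p' rp']|[p1 [q1 [l ne ap1 oq1]]]].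
    have ap' := alpha_sub (cM p' (iso p')) (lM p' (iso p')) rp'.
    have [x ax] := alpha_n0 V finT g.
    have e : p = p'.
      by apply: (disj_eq dj ap'); exists x; split=> //; apply: ap.
    by rewrite e.
  have [x ax] := alpha_n0 V finT g.
  have [y oy] := omega_n0 V finT g.
  have e1 : p = p1 by apply: (disj_eq dj ap1); exists x; split=> //; apply: ap.
  have e2 : p = q1 by apply: (disj_eq dj oq1); exists y; split=> //; apply: oq.
  by case: ne; rewrite -e1 -e2.
split.
- by split.
- split; first by move=> h; apply: ii_iii; apply: MD_ii.
  by move=> h; apply: ii_MD; apply: iii_ii.
- by move=> h; exact: (MD_ii h).1.
Qed.
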